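(* Let $p$ be a prime and $(\Gamma,\theta)$ an oriented profinite group. Suppose that for every open subgroup $U\le\Gamma$ and every natural number $n$ the natural map $H^1(U,\mathbb{Z}_p(1)/p^n)\to H^1(U,\mathbb{Z}_p(1)/p)$ is surjective. Then the same surjectivity holds for every closed subgroup $H\le\Gamma$ and every $n$, i.e. $(\Gamma,\theta)$ is cyclotomic.
   Context: An orientation is a continuous homomorphism $\theta:\Gamma\to\mathbb{Z}_p^\times$ with image in $1+p\mathbb{Z}_p$; $\mathbb{Z}_p(1)$ is $\mathbb{Z}_p$ with action $g.x=\theta(g)x$ and $\mathbb{Z}_p(1)/p^m=\mathbb{Z}_p(1)/p^m\mathbb{Z}_p(1)$. Cohomology is continuous. $(\Gamma,\theta)$ is cyclotomic if for every closed subgroup $H$ and every $m$ the map $H^1(H,\mathbb{Z}_p(1)/p^m)\to H^1(H,\mathbb{Z}_p(1)/p)$ is surjective. *)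

(* Defs.v *)
From HB Require Import structures.
From mathcomp Require Import all_boot all_order all_algebra.
From mathcomp Require Import all_classical all_reals all_analysis.
Set Implicit Arguments. Unset Strict Implicit. Unset Printing Implicit Defensive.
Import Order.TTheory GRing.Theory Num.Theory.
Local Open Scope classical_set_scope.

Definition is_profinite_group (G : topologicalType)
  (mul : G -> G -> G) (inv : G -> G) (one : G) : Prop :=
  [/\ (forall x y z, mul x (mul y z) = mul (mul x y) z),
      (forall x, mul one x = x /\ mul x one = x),
      (forall x, mul (inv x) x = one /\ mul x (inv x) = one),
      (continuous (fun xy : G * G => mul xy.1 xy.2) /\ continuous inv) &
      [/\ compact [set: G], hausdorff_space G &
       totally_disconnected [set: G]]].

Definition is_subgroup (G : Type) (mul : G -> G -> G) (inv : G -> G) (one : G)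
  (H : set G) : Prop :=
  [/\ H one, (forall x y, H x -> H y -> H (mul x y)) & (forall x, H x -> H (inv x))].

Definition closed_subgroup (G : topologicalType) mul inv (one : G) (H : set G) :=
  is_subgroup mul inv one H /\ closed H.

Definition open_subgroup (G : topologicalType) mul inv (one : G) (H : set G) :=
  is_subgroup mul inv one H /\ open H.

(* p-adic integers Z_p = lim Z/p^n, an element being represented by its
   sequence of canonical residues x n in [0, p^n) with x (n+1) = x n mod p^n. *)
Definition is_padic (p : nat) (x : nat -> int) : Prop :=
  (forall n, 0 <= x n < (p ^ n)%:Z)%R /\
  (forall n, (x n.+1 = x n %[mod (p ^ n)%:Z])%Z).

(* An orientation theta : Gamma -> Z_p^x, continuous homomorphism with image in
   1 + pZ_p.  theta g n is the residue of theta(g) modulo p^n.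
   Continuity for the p-adic (= inverse limit) topology: each residue map
   g |-> theta g n is locally constant. *)
Definition is_orientation (p : nat) (G : topologicalType) (mul : G -> G -> G)
  (theta : G -> nat -> int) : Prop :=
  [/\ (forall g, is_padic p (theta g)),
      (forall g h n, (theta (mul g h) n = theta g n * theta h n %[mod (p ^ n)%:Z])%Z),
      (forall g, theta g 1 = 1%R) &
      (forall n (g : G), exists V : set G, [/\ open V, V g &
          forall h, V h -> theta h n = theta g n])].

(* Continuous 1-cocycles of the closed subgroup H with values in
   Z_p(1)/p^m = Z/p^m (action h.x = theta(h) x), represented by integer-valued
   maps (values read modulo p^m).  Continuity for the discrete target and the
   subspace topology on H means local constancy on H. *)
Definition cont_cocycle (p m : nat) (G : topologicalType) (mul : G -> G -> G)
  (theta : G -> nat -> int) (H : set G) (c : G -> int) : Prop :=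
  (forall g h, H g -> H h ->
     (c (mul g h) = c g + theta g m * c h %[mod (p ^ m)%:Z])%Z) /\
  (forall g, H g -> exists V : set G, [/\ open V, V g &
      forall h, H h -> V h -> (c h = c g %[mod (p ^ m)%:Z])%Z]).

(* The natural map H^1(H, Z_p(1)/p^m) -> H^1(H, Z_p(1)/p), induced by reduction
   mod p, is surjective: every continuous cocycle mod p is cohomologous (differs
   by a coboundary h |-> theta(h) a - a) to the reduction of a continuous
   cocycle mod p^m. *)
Definition H1_reduction_surj (p m : nat) (G : topologicalType) (mul : G -> G -> G)
  (theta : G -> nat -> int) (H : set G) : Prop :=
  forall c : G -> int, cont_cocycle p 1 mul theta H c ->
  exists c' : G -> int, cont_cocycle p m mul theta H c' /\
  exists a : int, forall h, H h ->
    (c' h = c h + (theta h 1%N * a - a) %[mod p%:Z])%Z.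

Definition cyclotomic (p : nat) (G : topologicalType) mul inv (one : G)
  (theta : G -> nat -> int) : Prop :=
  forall (H : set G) (m : nat), closed_subgroup mul inv one H -> (0 < m)%N ->
    H1_reduction_surj p m mul theta H.

(* Main.v *)
Require Import Defs.
From HB Require Import structures.
From mathcomp Require Import all_boot all_order all_algebra.
From mathcomp Require Import all_classical all_reals all_analysis.
From mathcomp Require Import ring.
Import Order.TTheory GRing.Theory Num.Theory.
Local Open Scope classical_set_scope.

Lemma mul_near {G : topologicalType} {mul : G -> G -> G} {inv : G -> G} {one : G} :
  is_profinite_group mul inv one ->
  forall a b (S : set G), nbhs (mul a b) S ->
  exists A B, [/\ nbhs a A, nbhs b B & forall u v, A u -> B v -> S (mul u v)].
Proof.
case=> _ _ _ [cm _] _ a b S nS.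
have := cm (a, b) S nS; case=> -[A B] /= [nA nB] sAB.
exists A, B; split => // u v Au Bv; exact: (sAB (u, v)).
Qed.

Lemma lmul_nbhs {G : topologicalType} {mul : G -> G -> G} {inv : G -> G} {one : G} :
  is_profinite_group mul inv one ->
  forall a b (S : set G), nbhs (mul a b) S -> nbhs b (fun v => S (mul a v)).
Proof.
move=> hG a b S nS; have [A [B [nA nB sAB]]] := mul_near hG _ _ _ nS.
apply: filterS nB => v Bv; apply: sAB => //; exact: nbhs_singleton.
Qed.

Lemma subgroup_open {G : topologicalType} {mul : G -> G -> G} {inv : G -> G} {one : G}
  (N : set G) : is_profinite_group mul inv one ->
  is_subgroup mul inv one N -> nbhs one N -> open N.
Proof.
move=> hG [N1 NM NI] nN; rewrite openE => x Nx.
have [ass idl invl _ _] := hG.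
have nx : nbhs (mul (inv x) x) N by rewrite (proj1 (invl x)).
have := lmul_nbhs hG _ _ _ nx; apply: filterS => g Ng.
have -> : g = mul x (mul (inv x) g) by rewrite ass (proj2 (invl x)) (proj1 (idl g)).
by apply: NM.
Qed.

Lemma uniform_clopen {G : topologicalType} {mul : G -> G -> G} {inv : G -> G} {one : G}
  (W : set G) : is_profinite_group mul inv one -> clopen W ->
  \forall x \near one, forall y z, W (mul y (mul x z)) <-> W (mul y z).
Proof.
move=> hG [oW clW]; have [ass idl invl _ [cT _ _]] := hG.
have cTT : compact [set: G * G] by rewrite -setXTT; exact: compact_setX.
have hc := (iffLR (compact_near_coveringP _)) cTT G (nbhs one)
  (fun i p => W (mul p.1 (mul i p.2)) <-> W (mul p.1 p.2)) (nbhs_filter one).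
suff cov : forall p : G * G, [set: G * G] p ->
    \forall p' \near p & i \near one, W (mul p'.1 (mul i p'.2)) <-> W (mul p'.1 p'.2).
  by apply: filterS (hc cov) => i sUi y z; exact: (sUi (y, z)).
- move=> [y z] _.
  have key : forall S : set G, open S -> S (mul y z) ->
      \forall p' \near (y, z) & i \near one,
        S (mul p'.1 (mul i p'.2)) /\ S (mul p'.1 p'.2).
    move=> S oS Syz.
    have nS : nbhs (mul y (mul one z)) S.
      by rewrite (proj1 (idl z)); exact: open_nbhs_nbhs.
    have [A1 [B1 [nA1 nB1 s1]]] := mul_near hG _ _ _ nS.
    have [A2 [B2 [nA2 nB2 s2]]] := mul_near hG _ _ _ nB1.
    have nS' : nbhs (mul y z) S by exact: open_nbhs_nbhs.
    have [A3 [B3 [nA3 nB3 s3]]] := mul_near hG _ _ _ nS'.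
    exists ((A1 `&` A3) `*` (B2 `&` B3), A2) => /=.
      split => //; exists (A1 `&` A3, B2 `&` B3) => //=; split; exact: filterI.
    move=> [[y' z'] i] /= [[[Ay1 Ay3] [Bz2 Bz3]] Ai2]; split.
      by apply: s1 => //; apply: s2.
    by apply: s3.
  have [Wyz|nWyz] := pselect (W (mul y z)).
    apply: filterS (key W oW Wyz) => -[p' i] [h1 h2]; by split.
  have oC : open (~` W) by exact: closed_openC.
  apply: filterS (key _ oC nWyz) => -[p' i] [h1 h2]; by split.
Qed.


Lemma grp_mulKg {G : topologicalType} {mul : G -> G -> G} {inv : G -> G} {one : G} :
  is_profinite_group mul inv one -> forall x y, mul (inv x) (mul x y) = y.
Proof.
by case=> ass idl invl _ _ x y; rewrite ass (proj1 (invl x)) (proj1 (idl y)).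
Qed.

Lemma grp_mulKVg {G : topologicalType} {mul : G -> G -> G} {inv : G -> G} {one : G} :
  is_profinite_group mul inv one -> forall x y, mul x (mul (inv x) y) = y.
Proof.
by case=> ass idl invl _ _ x y; rewrite ass (proj2 (invl x)) (proj1 (idl y)).
Qed.

Lemma grp_invK {G : topologicalType} {mul : G -> G -> G} {inv : G -> G} {one : G} :
  is_profinite_group mul inv one -> forall x, inv (inv x) = x.
Proof.
move=> hG x; have [ass idl invl _ _] := hG.
rewrite -[RHS](grp_mulKg hG (inv x) x) (proj1 (invl x)) (proj2 (idl _)) //.
Qed.

Lemma grp_invM {G : topologicalType} {mul : G -> G -> G} {inv : G -> G} {one : G} :
  is_profinite_group mul inv one -> forall x y, inv (mul x y) = mul (inv y) (inv x).
Proof.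
move=> hG x y; have [ass idl invl _ _] := hG.
have e : mul (mul x y) (mul (inv y) (inv x)) = one.
  by rewrite -ass (grp_mulKVg hG) (proj2 (invl x)).
rewrite -[RHS](grp_mulKg hG (mul x y)) e (proj2 (idl _)) //.
Qed.

Lemma open_normal_sub {G : topologicalType} {mul : G -> G -> G} {inv : G -> G} {one : G}
  (W : set G) : is_profinite_group mul inv one -> clopen W -> W one ->
  exists N : set G, [/\ is_subgroup mul inv one N, open N, N `<=` W &
    forall g n, N n -> N (mul (mul g n) (inv g))].
Proof.
move=> hG cW W1; have [ass idl invl _ _] := hG.
pose N := fun x => forall y z, W (mul y (mul x z)) <-> W (mul y z).
have sg : is_subgroup mul inv one N.
  split.
  - by move=> y z; rewrite (proj1 (idl z)).
  - by move=> a b Na Nb y z; rewrite -ass Na Nb.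
  - move=> a Na y z; rewrite -[in X in _ <-> X](grp_mulKVg hG a z).
    by rewrite Na.
exists N; split => //.
- apply: (subgroup_open N hG sg).
  exact: (uniform_clopen W hG cW).
- move=> x Nx; have := Nx one one.
  by rewrite (proj2 (idl x)) (proj1 (idl x)) (proj1 (idl one)) => ->.
- move=> g n Nn y z.
  rewrite -!ass [mul y (mul g _)]ass Nn -ass (grp_mulKVg hG) //.
Qed.

Lemma clopen_sep_nbhs {T : topologicalType} (x : T) (O : set T) :
  compact [set: T] -> open O -> O x ->
  (forall y, ~ O y -> exists C, [/\ clopen C, C x & ~ C y]) ->
  exists C, [/\ clopen C, C x & C `<=` O].
Proof.
move=> cT oO Ox sep; apply: contrapT => hno.
have hC : forall C, clopen C -> C x -> exists y, C y /\ ~ O y.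
  move=> C cC Cx; apply: contrapT => hy; apply: hno; exists C; split => //.
  move=> z Cz; apply: contrapT => nOz; apply: hy; by exists z.
pose D := [set C : set T | clopen C /\ C x].
pose F := filter_from D (fun C => C `&` ~` O).
have FF : Filter F.
  apply: filter_from_filter; first by exists setT; split => //; exact: clopenT.
  move=> A B [cA Ax] [cB Bx]; exists (A `&` B); first by split => //; exact: clopenI.
  by move=> z [[Az Bz] nOz]; split.
have PF : ProperFilter F.
  apply: filter_from_proper => C [cC Cx].
  by have [y [Cy nOy]] := hC C cC Cx; exists y.
have [y [_ cly]] : [set: T] `&` cluster F !=set0 by apply: cT; exact: filterT.
move: cly; rewrite clusterE => cly.
have nOy : ~ O y.
  have clO : closed (~` O) by exact: open_closedC.
  apply: clO; apply: cly; exists setT; first by split => //; exact: clopenT.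
  by move=> z [].
have [C [[oC clC] Cx nCy]] := sep y nOy.
apply: nCy; apply: (clC); apply: cly; exists C; first by split.
by move=> z [].
Qed.

Definition qcomp {T : topologicalType} (x : T) : set T :=
  \bigcap_(C in [set C : set T | clopen C /\ C x]) C.

Lemma qcomp_closed {T : topologicalType} (x : T) : closed (qcomp x).
Proof. by apply: closed_bigI => C [[_ ?] _]. Qed.

Lemma qcomp_sep {T : topologicalType} (x : T) (A B : set T) :
  compact [set: T] -> hausdorff_space T ->
  closed A -> closed B -> A `&` B = set0 -> qcomp x = A `|` B -> A x -> B = set0.
Proof.
move=> cT hT clA clB AB0 QAB Ax.
have nT := compact_normal hT cT.
have snB : set_nbhs A (~` B).
  move=> a Aa; apply: open_nbhs_nbhs; split; first exact: closed_openC.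
  by move=> Ba; have : (A `&` B) a by []; rewrite AB0.
have [N sN clN] := nT A clA _ snB.
pose U := N°; pose V := ~` closure N.
have oU : open U by exact: open_interior.
have oV : open V by exact/closed_openC/closed_closure.
have AU : A `<=` U by move=> a Aa; exact: sN.
have BV : B `<=` V by move=> b Bb cNb; exact: (clN b cNb).
have UV : forall z, U z -> V z -> False.
  move=> z Uz; apply; apply: subset_closure; exact: interior_subset.
have [C [[oC cC] Cx CUV]] : exists C, [/\ clopen C, C x & C `<=` U `|` V].
  apply: clopen_sep_nbhs => //; first exact: openU.
    by left; exact: AU.
  move=> y nUVy.
  have nQy : ~ qcomp x y.
    rewrite QAB => -[/AU ?|/BV ?]; apply: nUVy; [by left|by right].
  apply: contrapT => hy; apply: nQy => C [cC Cx]; apply: contrapT => nCy.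
  by apply: hy; exists C.
have cCU : clopen (C `&` U).
  split; first exact: openI.
  have -> : C `&` U = C `&` ~` V.
    apply/seteqP; split => z [Cz h]; split => //.
      by move=> Vz; exact: UV Vz.
    by case: (CUV z Cz).
  by apply: closedI => //; exact: open_closedC.
have QCU : qcomp x `<=` C `&` U by move=> z; apply; split => //; split => //; exact: AU.
apply/seteqP; split => // b Bb.
have Qb : qcomp x b by rewrite QAB; right.
have [_ Ub] := QCU b Qb.
by apply: UV Ub (BV b Bb).
Qed.

Lemma qcomp_connected {T : topologicalType} (x : T) :
  compact [set: T] -> hausdorff_space T -> connected (qcomp x).
Proof.
move=> cT hT; apply/connectedP => E [E0 QE [sep1 sep2]].
have clQ := qcomp_closed x.
have clF : closed (E false).
  move=> z cz.
  have Qz : qcomp x z by apply: clQ; rewrite QE; apply: closureS cz => w ?; left.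
  move: Qz; rewrite QE => -[//|Ez].
  by have : (closure (E false) `&` E true) z by []; rewrite sep1.
have clT : closed (E true).
  move=> z cz.
  have Qz : qcomp x z by apply: clQ; rewrite QE; apply: closureS cz => w ?; right.
  move: Qz; rewrite QE => -[Ez|//].
  by have : (E false `&` closure (E true)) z by []; rewrite sep2.
have dj : E false `&` E true = set0.
  apply/seteqP; split => // z [zf zt].
  have : (closure (E false) `&` E true) z.
    by split => //; exact: subset_closure.
  by rewrite sep1.
have Qx : qcomp x x by move=> C [].
move: (Qx); rewrite QE => -[xf|xt].
  have := @qcomp_sep T x _ _ cT hT clF clT dj QE xf.
  by case: (E0 true) => z Ez E0'; rewrite E0' in Ez.
have := @qcomp_sep T x (E true) (E false) cT hT clT clF.
rewrite setIC setUC => /(_ dj QE xt).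
by case: (E0 false) => z Ez E0'; rewrite E0' in Ez.
Qed.

Lemma clopen_nbhs_sub {T : topologicalType} (x : T) (O : set T) :
  compact [set: T] -> hausdorff_space T -> totally_disconnected [set: T] ->
  open O -> O x -> exists C, [/\ clopen C, C x & C `<=` O].
Proof.
move=> cT hT tT oO Ox; apply: clopen_sep_nbhs => // y nOy.
have Qsub : qcomp x `<=` [set x].
  rewrite -(tT x) //; apply: connected_component_max => //.
    by move=> C [].
  exact: qcomp_connected.
have nQy : ~ qcomp x y by move=> /Qsub yx; apply: nOy; rewrite yx.
apply: contrapT => hy; apply: nQy => C [cC Cx]; apply: contrapT => nCy.
by apply: hy; exists C.
Qed.

Local Open Scope ring_scope.
Lemma modzP (d a b : int) : (a = b %[mod d])%Z <-> (d %| a - b)%Z.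
Proof. by split => [/eqP|h]; rewrite ?eqz_mod_dvd //; apply/eqP; rewrite eqz_mod_dvd. Qed.

Theorem mainTheorem10 (p : nat) (G : topologicalType)
  (mul : G -> G -> G) (inv : G -> G) (one : G) (theta : G -> nat -> int) :
  prime p ->
  is_profinite_group mul inv one ->
  is_orientation p mul theta ->
  (forall (U : set G) (n : nat), open_subgroup mul inv one U -> (0 < n)%N ->
     H1_reduction_surj p n mul theta U) ->
  cyclotomic p mul inv one theta.
Proof.
move=> pp hG hO hyp H m [[H1 HM HI] clH] m0 c [ccoc ccont].
have [ass idl invl [cm ci] [cT hT tT]] := hG.
have [padic thmul th1 thcont] := hO.
rewrite expn1 in ccoc ccont.
have cadd : forall g h, H g -> H h -> (p%:Z %| c (mul g h) - (c g + c h))%Z.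
  by move=> g h Hg Hh; rewrite -modzP -[c h]mul1r -(th1 g) ccoc.
have c1 : (p%:Z %| c one)%Z.
  have := cadd one one H1 H1; rewrite (proj1 (idl one)).
  have -> : c one - (c one + c one) = - c one by ring.
  by rewrite rpredN.
have [V [oV V1 sV]] := ccont one H1.
have [W [cW W1 WV]] := clopen_nbhs_sub one V cT hT tT oV V1.
have [N [[N1 NM NI] oN NW Nnorm]] := open_normal_sub W hG cW W1.
have KN : forall h, H h -> N h -> (p%:Z %| c h)%Z.
  move=> h Hh Nh; have := sV h Hh (WV h (NW h Nh)); rewrite modzP => e.
  by have := rpredD e c1; rewrite subrK.
pose U := fun u => exists g, H g /\ exists n, N n /\ u = mul g n.
have HU : forall h, H h -> U h.
  by move=> h Hh; exists h; split => //; exists one; split => //; rewrite (proj2 (idl h)).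
have sgU : is_subgroup mul inv one U.
  split; first exact: HU.
  - move=> _ _ [g1 [Hg1 [n1 [Nn1 ->]]]] [g2 [Hg2 [n2 [Nn2 ->]]]].
    exists (mul g1 g2); split; first exact: HM.
    exists (mul (mul (mul (inv g2) n1) (inv (inv g2))) n2); split.
      by apply: NM => //; apply: Nnorm.
    by rewrite (grp_invK hG) -!ass (grp_mulKVg hG).
  - move=> _ [g [Hg [n [Nn ->]]]].
    exists (inv g); split; first exact: HI.
    exists (mul (mul g (inv n)) (inv g)); split; first by apply: Nnorm; apply: NI.
    by rewrite (grp_invM hG) -!ass (grp_mulKg hG).
have oU : open U.
  apply: (subgroup_open U hG sgU).
  have : nbhs one N by apply: open_nbhs_nbhs.
  apply: filterS => n Nn; exists one; split => //; exists n; split => //.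
  by rewrite (proj1 (idl n)).
pose cU := fun u => c (xget one (fun g => H g /\ exists n, N n /\ u = mul g n)).
have key : forall g n, H g -> N n -> (p%:Z %| cU (mul g n) - c g)%Z.
  move=> g n Hg Nn; rewrite /cU.
  pose P := fun g0 => H g0 /\ exists n0, N n0 /\ mul g n = mul g0 n0.
  have : P (xget one P) by apply: xgetPex; exists g; split => //; exists n.
  rewrite -/(cU (mul g n)) /cU -/P.
  set g' := xget one P => -[Hg' [n' [Nn' e]]].
  have e2 : mul (inv g') g = mul n' (inv n).
    have eg : g = mul (mul g n) (inv n) by rewrite -ass (proj2 (invl n)) (proj2 (idl g)).
    by rewrite [X in mul _ X = _]eg e -!ass (grp_mulKg hG).
  have h0 : (p%:Z %| c (mul (inv g') g))%Z.
    by apply: KN; [apply: HM => //; apply: HI | rewrite e2; apply: NM => //; apply: NI].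
  have := cadd g' (mul (inv g') g) Hg' (HM _ _ (HI _ Hg') Hg).
  rewrite (grp_mulKVg hG) => h1.
  have -> : c g' - c g = - (c g - (c g' + c (mul (inv g') g))) - c (mul (inv g') g) by ring.
  by rewrite rpredB ?rpredN.
have Ucoc : cont_cocycle p 1 mul theta U cU.
  split.
  - move=> _ _ [g1 [Hg1 [n1 [Nn1 ->]]]] [g2 [Hg2 [n2 [Nn2 ->]]]].
    rewrite expn1 modzP th1 mul1r.
    have e : mul (mul g1 n1) (mul g2 n2) =
        mul (mul g1 g2) (mul (mul (mul (inv g2) n1) (inv (inv g2))) n2).
      by rewrite (grp_invK hG) -!ass (grp_mulKVg hG).
    have Nn3 : N (mul (mul (mul (inv g2) n1) (inv (inv g2))) n2).
      by apply: NM => //; apply: Nnorm.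
    have k1 := key _ _ Hg1 Nn1.
    have k2 := key _ _ Hg2 Nn2.
    have k3 := key _ _ (HM _ _ Hg1 Hg2) Nn3.
    have k4 := cadd _ _ Hg1 Hg2.
    rewrite e.
    set A := cU (mul (mul g1 g2) _) in k3 *.
    set B := cU (mul g1 n1) in k1 *.
    set C := cU (mul g2 n2) in k2 *.
    have -> : A - (B + C) = (A - c (mul g1 g2)) + (c (mul g1 g2) - (c g1 + c g2))
        - (B - c g1) - (C - c g2) by ring.
    by apply: rpredB => //; apply: rpredB => //; apply: rpredD.
  - move=> _ [g [Hg [n [Nn ->]]]].
    exists (fun v => N (mul (inv g) v)); split.
    + rewrite openE => v Nv.
      apply: (lmul_nbhs hG (inv g) v N).
      exact: open_nbhs_nbhs.
    + by rewrite (grp_mulKg hG).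
    + move=> v Uv Nv; rewrite expn1 modzP.
      have k1 := key _ _ Hg Nn.
      have k2 := key _ _ Hg Nv.
      rewrite (grp_mulKVg hG) in k2.
      have -> : cU v - cU (mul g n) = (cU v - c g) - (cU (mul g n) - c g) by ring.
      by rewrite rpredB.
have [c' [[c'coc c'cont] [a ha]]] := hyp U m (conj sgU oU) m0 cU Ucoc.
exists c'; split.
  split.
  - by move=> g h Hg Hh; apply: c'coc; apply: HU.
  - move=> g Hg; have [V' [oV' V'g sV']] := c'cont g (HU g Hg).
    exists V'; split => // h Hh V'h; apply: sV' => //; exact: HU.
exists a => h Hh.
have := ha h (HU h Hh).
rewrite !modzP th1 mul1r subrr !addr0 => e.
have := key h one Hh N1; rewrite (proj2 (idl h)) => k.
have -> : c' h - c h = (c' h - cU h) + (cU h - c h) by ring.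
by rewrite rpredD.
Qed.
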